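(* Let $k$ be a field with $\mathrm{char}(k)\neq 2$, let $n$ be an odd positive integer not divisible by $\mathrm{char}(k)$, and let $\mathcal{G}$ be an abstract theta group of type $(n,\ldots,n)$ over $k$, with $K = \mathcal{G}/\mathbb{G}_m$. Then the coboundary map $\Delta_{\mathcal{G}}: H^1(k,K)\to H^2(k,\mathbb{G}_m) = \mathrm{Br}(k)$ satisfies $\Delta_{\mathcal{G}}(H^1(k,K)) \subset \mathrm{Br}(k)[n]$.
   Context: An abstract theta group over $k$ is an algebraic $k$-group scheme $\mathcal{G}$ in a central extension $1\to\mathbb{G}_m\to\mathcal{G}\to K\to 0$ such that the center of $\mathcal{G}$ is exactly $\mathbb{G}_m$, $K$ is finite étale whose underlying abelian group is of the form $B\oplus B$, and $\mathrm{char}(k)\nmid\#K$; it has type $(n,\ldots,n)$ if $B\cong(\mathbb{Z}/n\mathbb{Z})^g$ for some $g$. *)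

(* Defs.v *)
(* Galois-cohomological model of theta groups over k:
   everything is expressed on ks-points with the continuous action of
   Gal(ks/k), ks a separable closure of k. *)
From HB Require Import structures.
From mathcomp Require Import all_boot all_order all_algebra all_field.
Set Implicit Arguments. Unset Strict Implicit. Unset Printing Implicit Defensive.
Import GRing.Theory.
Local Open Scope ring_scope.

Section ThetaGalois.
Variables (k ks : fieldType) (iota : {rmorphism k -> ks}).

Definition separable_closure : Prop :=
  (forall x : ks, exists p : {poly k},
      [/\ p != 0, separable_poly p & root (map_poly iota p) x]) /\
  (forall p : {poly ks}, separable_poly p -> (1 < size p)%N ->
      exists x, root p x).

(* s is an element of the absolute Galois group Gal(ks/k) *)
Definition kaut (s : ks -> ks) : Prop :=
  [/\ {morph s : x y / x + y}, {morph s : x y / x * y}, s 1 = 1,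
      bijective s & forall a, s (iota a) = iota a].

Definition agree (S : seq ks) (s t : ks -> ks) : Prop :=
  forall x, x \in S -> s x = t x.

(* continuity (Krull topology on Gal, discrete target) *)
Definition cont1 (X : Type) (f : (ks -> ks) -> X) : Prop :=
  exists S : seq ks, forall s t, kaut s -> kaut t -> agree S s t -> f s = f t.

(* continuity of a Galois action on a single element: open stabilizer *)
Definition cont_act (X : Type) (act : (ks -> ks) -> X -> X) : Prop :=
  forall x, exists S : seq ks, forall s, kaut s -> agree S s id -> act s x = x.

(* An abstract theta group over k, given by its ks-points
   1 -> ks^* -> G(ks) -> K(ks) -> 0 with compatible continuous
   Gal(ks/k)-actions, centre of G exactly ks^*. *)
Record theta_group := ThetaGroup {
  tK : finZmodType;
  tG : Type;
  gmul : tG -> tG -> tG;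
  gone : tG;
  ginv : tG -> tG;
  gmulA : forall x y z, gmul x (gmul y z) = gmul (gmul x y) z;
  gmul1 : forall x, gmul gone x = x;
  gmulV : forall x, gmul (ginv x) x = gone;
  incl : ks -> tG;
  proj : tG -> tK;
  incl_mul : forall a b, a != 0 -> b != 0 -> incl (a * b) = gmul (incl a) (incl b);
  incl_inj : forall a b, a != 0 -> b != 0 -> incl a = incl b -> a = b;
  proj_mul : forall x y, proj (gmul x y) = proj x + proj y;
  proj_surj : forall u, exists x, proj x = u;
  proj_ker : forall x, proj x = 0 <-> exists2 a, a != 0 & x = incl a;
  center_Gm : forall x, (forall y, gmul x y = gmul y x) <->
                        exists2 a, a != 0 & x = incl a;
  actK : (ks -> ks) -> tK -> tK;
  actK_add : forall s, kaut s -> {morph actK s : u v / u + v};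
  actK_id : forall u, actK id u = u;
  actK_comp : forall s t u, kaut s -> kaut t -> actK (s \o t) u = actK s (actK t u);
  actK_cont : cont_act actK;
  actG : (ks -> ks) -> tG -> tG;
  actG_mul : forall s, kaut s -> {morph actG s : x y / gmul x y};
  actG_id : forall x, actG id x = x;
  actG_comp : forall s t x, kaut s -> kaut t -> actG (s \o t) x = actG s (actG t x);
  actG_cont : cont_act actG;
  actG_incl : forall s a, kaut s -> a != 0 -> actG s (incl a) = incl (s a);
  actG_proj : forall s x, kaut s -> proj (actG s x) = actK s (proj x)
}.

(* type (n,...,n): K(ks) = B (+) B with B = (Z/nZ)^g, i.e. K = (Z/nZ)^(2g) *)
Definition type_nn (T : theta_group) (n : nat) : Prop :=
  exists (g : nat) (e : 'I_(g + g) -> tK T),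
    (forall i, e i *+ n = 0) /\
    bijective (fun c : {ffun 'I_(g + g) -> 'I_n} => \sum_i e i *+ c i).

Definition cocycle1 (T : theta_group) (a : (ks -> ks) -> tK T) : Prop :=
  cont1 a /\ forall s t, kaut s -> kaut t -> a (s \o t) = a s + @actK T s (a t).

(* c : Gal x Gal -> ks^* is the 2-cocycle Delta_G(a) obtained from a
   continuous lift g of the cocycle a:  c(s,t) = g_s . s(g_t) . g_{st}^{-1} *)
Definition coboundary_rep (T : theta_group) (a : (ks -> ks) -> tK T)
    (c : (ks -> ks) -> (ks -> ks) -> ks) : Prop :=
  exists g : (ks -> ks) -> tG T,
    [/\ cont1 g, (forall s, kaut s -> @proj T (g s) = a s) &
        forall s t, kaut s -> kaut t ->
          c s t != 0 /\
          @incl T (c s t) = gmul (gmul (g s) (@actG T s (g t))) (ginv (g (s \o t)))].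

Definition trivial_in_Br (c : (ks -> ks) -> (ks -> ks) -> ks) : Prop :=
  exists b : (ks -> ks) -> ks,
    [/\ cont1 b, (forall s, kaut s -> b s != 0) &
        forall s t, kaut s -> kaut t -> c s t = b s * s (b t) / b (s \o t)].

Definition in_Br_tors (n : nat) (c : (ks -> ks) -> (ks -> ks) -> ks) : Prop :=
  trivial_in_Br (fun s t => c s t ^+ n).

End ThetaGalois.

(* Main.v *)
Require Import Defs.
From HB Require Import structures.
From mathcomp Require Import all_boot all_order all_algebra all_field.
From Stdlib Require Import ClassicalEpsilon.
Local Open Scope ring_scope.
Import GRing.Theory.
Set Implicit Arguments.
Unset Strict Implicit.

Section GroupLemmas.
Variables (k ks : fieldType) (iota : {rmorphism k -> ks}) (T : theta_group iota).
Local Notation m := (@gmul _ _ _ T).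
Local Notation e := (@gone _ _ _ T).
Local Notation inv := (@ginv _ _ _ T).
Local Notation G := (tG T).

Lemma mulgV' (x : G) : m x (inv x) = e.
Proof.
have h := gmulV (inv x).
rewrite -[m x (inv x)]gmul1 -h -gmulA (gmulA (inv x)) gmulV gmul1 //.
Qed.

Lemma mulg1' (x : G) : m x e = x.
Proof. by rewrite -(gmulV x) gmulA mulgV' gmul1. Qed.

Lemma mulIg (x y z : G) : m x y = m x z -> y = z.
Proof. by move=> h; rewrite -(gmul1 y) -(gmulV x) -gmulA h gmulA gmulV gmul1. Qed.

Lemma mulgI (x y z : G) : m y x = m z x -> y = z.
Proof. by move=> h; rewrite -(mulg1' y) -(mulgV' x) gmulA h -gmulA mulgV' mulg1'. Qed.

Lemma idem (x : G) : m x x = x -> x = e.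
Proof. by move=> h; apply: (@mulgI x); rewrite h gmul1. Qed.

Fixpoint gexp (x : G) (i : nat) : G :=
  match i with 0%N => e | S i => m (gexp x i) x end.

Lemma gexp1 i : gexp e i = e.
Proof. by elim: i => //= i ->; rewrite gmul1. Qed.

Lemma gexpD x a b : gexp x (a + b) = m (gexp x a) (gexp x b).
Proof.
elim: b => [|b IH]; first by rewrite addn0 /= mulg1'.
by rewrite addnS /= IH gmulA.
Qed.

Lemma gexp_comm x a b : m (gexp x a) (gexp x b) = m (gexp x b) (gexp x a).
Proof. by rewrite -!gexpD addnC. Qed.

Lemma gexpM x a b : gexp x (a * b) = gexp (gexp x a) b.
Proof.
elim: b => [|b IH]; first by rewrite muln0.
by rewrite mulnS gexpD IH /= -IH gexp_comm.
Qed.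

Definition central (w : G) := forall y, m w y = m y w.

Lemma gexp_commg x y i : m x y = m y x -> m (gexp x i) y = m y (gexp x i).
Proof.
move=> h; elim: i => [|i IH] /=; first by rewrite gmul1 mulg1'.
by rewrite -gmulA h gmulA IH -gmulA.
Qed.

Lemma gexp_central w i : central w -> central (gexp w i).
Proof. by move=> h y; apply: gexp_commg. Qed.

Lemma swap_pow w x y : central w -> m y x = m w (m x y) ->
  forall i, m (gexp y i) x = m (gexp w i) (m x (gexp y i)).
Proof.
move=> cw h; elim=> [|i IH] /=; first by rewrite gmul1 mulg1' gmul1.
rewrite -gmulA h gmulA -(cw (gexp y i)) -gmulA (gmulA (gexp y i) x y) IH.
rewrite -!gmulA; rewrite [in LHS]gmulA cw -gmulA //.
Qed.

Lemma prod_pow w x y : central w -> m y x = m w (m x y) ->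
  forall i, gexp (m x y) i = m (gexp w 'C(i, 2)) (m (gexp x i) (gexp y i)).
Proof.
move=> cw h; elim=> [|i IH] /=; first by rewrite !gmul1.
rewrite IH binS bin1 gexpD -!gmulA; congr (m _ _).
rewrite (gmulA (gexp y i)) (swap_pow cw h) -!gmulA.
by rewrite gmulA -(gexp_central i cw) -gmulA.
Qed.

Local Notation pr := (@proj _ _ _ T).
Local Notation inc := (@incl _ _ _ T).

Lemma proj1' : pr e = 0.
Proof.
have h := proj_mul e e; rewrite gmul1 in h.
have : pr e + pr e - pr e = pr e - pr e by rewrite -h.
by rewrite addrK subrr.
Qed.

Lemma projV x : pr (inv x) = - pr x.
Proof.
have h := proj_mul (inv x) x; rewrite gmulV proj1' in h.
by apply/eqP; rewrite -addr_eq0 -h.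
Qed.

Lemma proj_exp x i : pr (gexp x i) = pr x *+ i.
Proof. by elim: i => [|i IH] /=; rewrite ?proj1' // proj_mul IH mulrSr. Qed.

Lemma incl1 : inc 1 = e.
Proof. by apply: idem; rewrite -incl_mul ?oner_neq0 // mulr1. Qed.

Lemma incl_exp a i : a != 0 -> gexp (inc a) i = inc (a ^+ i).
Proof.
move=> a0; elim: i => [|i IH] /=; first by rewrite expr0 incl1.
by rewrite IH exprSr incl_mul // expf_neq0.
Qed.

Lemma incl_central a : a != 0 -> central (inc a).
Proof. by move=> a0 y; apply: (proj2 (center_Gm (inc a))); exists a. Qed.

Lemma actG1 s : kaut iota s -> @actG _ _ _ T s e = e.
Proof. by move=> hs; apply: idem; rewrite -actG_mul ?gmul1. Qed.

Lemma actG_exp s x i : kaut iota s -> @actG _ _ _ T s (gexp x i) = gexp (@actG _ _ _ T s x) i.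
Proof.
move=> hs; elim: i => [|i IH] /=; first exact: actG1.
by rewrite actG_mul // IH.
Qed.

End GroupLemmas.

Theorem theorem27 (k ks : fieldType) (iota : {rmorphism k -> ks}) (n : nat)
  (Hsep : separable_closure iota)
  (Hchar2 : (2%:R : k) != 0)
  (Hnodd : odd n) (Hnpos : (0 < n)%N) (Hnchar : (n%:R : k) != 0)
  (T : theta_group iota) (HT : type_nn T n) :
  forall (a : (ks -> ks) -> tK T), cocycle1 a ->
  forall c, coboundary_rep a c -> in_Br_tors iota n c.
Proof.
move=> a [acont acoc] c [g [gcont gproj gc]].
have tors : forall u : tK T, u *+ n = 0.
  move=> u; case: HT => gg [e [he [f fK Kf]]].
  rewrite -[u]Kf; apply: (big_ind (fun v => v *+ n = 0)).
  - by rewrite mul0rn.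
  - by move=> x y hx hy; rewrite mulrnDl hx hy addr0.
  - by move=> i _; rewrite -mulrnA mulnC mulrnA he mul0rn.
have hB : forall x : tG T, exists l, l != 0 /\ gexp x n = incl T l.
  move=> x; have : @proj _ _ _ T (gexp x n) = 0 by rewrite proj_exp tors.
  by case/proj_ker => l l0 hl; exists l.
pose B := fun x => proj1_sig (constructive_indefinite_description _ (hB x)).
have HB : forall x, B x != 0 /\ gexp x n = incl T (B x).
  by move=> x; rewrite /B; case: constructive_indefinite_description.
exists (fun s => B (g s)); split.
- case: gcont => S HS; exists S => s t hs ht ag; by rewrite (HS s t hs ht ag).
- by move=> s _; case: (HB (g s)).
move=> s t hs ht.
case: (gc s t hs ht) => cn0 hc.
set x := g s; set y := @actG _ _ _ T s (g t); set z := g (s \o t).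
have hxy : gmul x y = gmul (incl T (c s t)) z.
  by rewrite hc -gmulA gmulV mulg1'.
have cen := incl_central cn0.
have e1 : gexp (gmul (incl T (c s t)) z) n = incl T (c s t ^+ n * B z).
  rewrite (@prod_pow _ _ _ _ (gone T)) ?gexp1 ?gmul1.
  - by rewrite incl_exp // (proj2 (HB z)) incl_mul // ?expf_neq0 // (proj1 (HB z)).
  - by move=> u; rewrite gmul1 mulg1'.
  - by rewrite cen.
have sB : s (B (g t)) != 0.
  case: hs => sD _ _ [s' ss' _] _.
  have s00 : s 0 = 0.
    have h := sD 0 0; rewrite addr0 in h.
    have : s 0 + s 0 - s 0 = s 0 - s 0 by rewrite -h.
    by rewrite addrK subrr.
  apply/eqP => h; have hb : B (g t) = 0 by rewrite -[B (g t)]ss' h -{1}s00 ss'.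
  by move: (proj1 (HB (g t))); rewrite hb eqxx.
have e2 : gexp (gmul x y) n = incl T (B x * s (B (g t))).
  pose wc := gmul (gmul y x) (ginv (gmul x y)).
  have wp : @proj _ _ _ T wc = 0.
    by rewrite /wc !proj_mul projV proj_mul (addrC (@proj _ _ _ T y)) subrr.
  case: (proj1 (proj_ker _) wp) => l l0 hl.
  have cw : central wc by rewrite hl; apply: incl_central.
  have hw : gmul y x = gmul wc (gmul x y) by rewrite /wc -gmulA gmulV mulg1'.
  rewrite (prod_pow cw hw).
  have wn : gexp wc n = gone T.
    have yn : gexp y n = incl T (s (B (g t))).
      by rewrite /y -actG_exp // (proj2 (HB (g t))) actG_incl // (proj1 (HB (g t))).
    have := swap_pow cw hw n.
    rewrite yn (incl_central sB x) -{1}(gmul1 (gmul x _)).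
    by move/mulgI => ->.
  rewrite bin2odd // gexpM wn gexp1 gmul1 (proj2 (HB x)).
  rewrite /y -actG_exp // (proj2 (HB (g t))) actG_incl // ?(proj1 (HB (g t))) //.
  by rewrite incl_mul // (proj1 (HB x)).
have := e2; rewrite hxy e1 => /incl_inj.
have bz := proj1 (HB z); have bx := proj1 (HB x).
rewrite mulf_neq0 ?expf_neq0 // mulf_neq0 // => /(_ isT isT) <-.
by rewrite mulfK.
Qed.
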